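(* Let $(C,\chi)$ be a Hopf heap. If a Grunspan map $\vartheta$ for $C$ exists, then necessarily $\vartheta(c)=\sum[c_{(1)},[c_{(4)},c_{(3)},c_{(2)}],c_{(5)}]$ for all $c\in C$; in particular it is unique. Moreover, if $f:C\to D$ is a morphism of Hopf heaps and $C,D$ have Grunspan maps $\vartheta_C,\vartheta_D$, then $f\circ\vartheta_C=\vartheta_D\circ f$.
   Context: Work over a field $\mathbb{F}$; coalgebras are coassociative, counital, nonzero, with Sweedler notation. $C^{\mathrm{co}}$ is the co-opposite coalgebra. A Hopf heap is a coalgebra $C$ with a coalgebra map $\chi:C\otimes C^{\mathrm{co}}\otimes C\to C$, $a\otimes b\otimes c\mapsto[a,b,c]$, such that $[[a,b,c],d,e]=[a,b,[c,d,e]]$ and $\sum[c_{(1)},c_{(2)},a]=\sum[a,c_{(1)},c_{(2)}]=\varepsilon(c)a$ for all $a,b,c,d,e$. A morphism of Hopf heaps $f:C\to D$ is a coalgebra map with $f([a,b,c])=[f(a),f(b),f(c)]$. A Grunspan map is a coalgebra map $\vartheta:C\to C$ with $[[a,b,\vartheta(c)],d,e]=[a,[d,c,b],e]$ for all $a,b,c,d,e\in C$. *)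

(* Defs.v *)
From HB Require Import structures.
From mathcomp Require Import all_boot all_algebra.
Set Implicit Arguments. Unset Strict Implicit. Unset Printing Implicit Defensive.
Import GRing.Theory.
Local Open Scope ring_scope.

(* The comultiplication is given in Sweedler form: [cop c] is a finite list of
   pairs (c1, c2) representing the tensor  sum c1 (x) c2  in C (x) C.
   Every statement about tensors is phrased through (multi)linear maps into an
   arbitrary F-vector space W (universal property of the tensor product), so
   only the represented tensor matters, never the particular list. *)

Definition sw (T : Type) (W : nmodType) (s : seq (T * T)) (g : T -> T -> W) : W :=
  \sum_(p <- s) g p.1 p.2.

Section Defs.
Variable F : fieldType.

Definition lin (U W : lmodType F) (f : U -> W) : Prop :=
  forall (a : F) x y, f (a *: x + y) = a *: f x + f y.

Definition linF (U : lmodType F) (f : U -> F) : Prop :=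
  forall (a : F) x y, f (a *: x + y) = a * f x + f y.

Definition bilin (U V W : lmodType F) (B : U -> V -> W) : Prop :=
  (forall y, lin (fun x => B x y)) /\ (forall x, lin (B x)).

Definition trilin (U V X W : lmodType F) (T : U -> V -> X -> W) : Prop :=
  (forall y z, lin (fun x => T x y z)) /\ (forall x z, lin (fun y => T x y z))
  /\ (forall x y, lin (T x y)).

Record is_coalgebra (C : lmodType F) (cop : C -> seq (C * C)) (eps : C -> F) : Prop := {
  cop_lin : forall (W : lmodType F) (B : C -> C -> W), bilin B ->
     forall (a : F) x y, sw (cop (a *: x + y)) B = a *: sw (cop x) B + sw (cop y) B;
  eps_lin : linF eps;
  coassoc : forall (W : lmodType F) (T : C -> C -> C -> W), trilin T -> forall c,
     sw (cop c) (fun x y => sw (cop x) (fun x1 x2 => T x1 x2 y)) =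
     sw (cop c) (fun x y => sw (cop y) (fun y1 y2 => T x y1 y2));
  counit_l : forall c, sw (cop c) (fun x y => eps x *: y) = c;
  counit_r : forall c, sw (cop c) (fun x y => eps y *: x) = c;
  coalg_nonzero : exists c : C, c != 0
}.

Definition coalg_map (C D : lmodType F) (copC : C -> seq (C * C)) (epsC : C -> F)
    (copD : D -> seq (D * D)) (epsD : D -> F) (g : C -> D) : Prop :=
  lin g /\
  (forall (W : lmodType F) (B : D -> D -> W), bilin B -> forall c,
      sw (copD (g c)) B = sw (copC c) (fun x y => B (g x) (g y))) /\
  (forall c, epsD (g c) = epsC c).

(* A linear map C (x) C^co (x) C -> C is a trilinear map; it is a
   coalgebra map iff Delta[a,b,c] = sum [a1,b2,c1] (x) [a2,b1,c2] and
   eps [a,b,c] = eps a eps b eps c. *)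
Definition is_hopf_heap (C : lmodType F) (cop : C -> seq (C * C)) (eps : C -> F)
    (chi : C -> C -> C -> C) : Prop :=
  is_coalgebra cop eps /\
  trilin chi /\
  (forall (W : lmodType F) (B : C -> C -> W), bilin B -> forall a b c,
     sw (cop (chi a b c)) B =
     sw (cop a) (fun a1 a2 => sw (cop b) (fun b1 b2 => sw (cop c) (fun c1 c2 =>
        B (chi a1 b2 c1) (chi a2 b1 c2))))) /\
  (forall a b c, eps (chi a b c) = eps a * eps b * eps c) /\
  (forall a b c d e, chi (chi a b c) d e = chi a b (chi c d e)) /\
  (forall a c, sw (cop c) (fun c1 c2 => chi c1 c2 a) = eps c *: a) /\
  (forall a c, sw (cop c) (fun c1 c2 => chi a c1 c2) = eps c *: a).

Definition heap_morphism (C D : lmodType F)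
    (copC : C -> seq (C * C)) (epsC : C -> F) (chiC : C -> C -> C -> C)
    (copD : D -> seq (D * D)) (epsD : D -> F) (chiD : D -> D -> D -> D)
    (f : C -> D) : Prop :=
  coalg_map copC epsC copD epsD f /\
  (forall a b c, f (chiC a b c) = chiD (f a) (f b) (f c)).

Definition grunspan (C : lmodType F) (cop : C -> seq (C * C)) (eps : C -> F)
    (chi : C -> C -> C -> C) (theta : C -> C) : Prop :=
  coalg_map cop eps cop eps theta /\
  (forall a b c d e, chi (chi a b (theta c)) d e = chi a (chi d c b) e).

(* sum [c1, [c4, c3, c2], c5]  with  c1 (x) ... (x) c5 = Delta^4 c
   (bracketing (id (x) (id (x) (id (x) Delta))) Delta ... ; irrelevant by coassociativity) *)
Definition grunspan_formula (C : lmodType F) (cop : C -> seq (C * C))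
    (chi : C -> C -> C -> C) (c : C) : C :=
  sw (cop c) (fun c1 r => sw (cop r) (fun c2 s => sw (cop s) (fun c3 t =>
    sw (cop t) (fun c4 c5 => chi c1 (chi c4 c3 c2) c5)))).

End Defs.

(* Main.v *)
Require Import Defs.
From mathcomp Require Import all_boot all_algebra.
Set Implicit Arguments. Unset Strict Implicit. Unset Printing Implicit Defensive.
Import GRing.Theory.
Local Open Scope ring_scope.

Section Aux.
Variable F : fieldType.

Lemma lin0 (U W : lmodType F) (G : U -> W) : lin G -> G 0 = 0.
Proof.
move=> H; have e := H 1 0 0; rewrite !scale1r addr0 in e.
have : G 0 + G 0 = G 0 + 0 by rewrite addr0 -e.
by move/addrI.
Qed.

Lemma linZ (U W : lmodType F) (G : U -> W) a x : lin G -> G (a *: x) = a *: G x.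
Proof. by move=> H; have := H a x 0; rewrite !addr0 (lin0 H) addr0. Qed.

Lemma linD (U W : lmodType F) (G : U -> W) x y : lin G -> G (x + y) = G x + G y.
Proof. by move=> H; have := H 1 x y; rewrite !scale1r. Qed.

Lemma lin_sw (U W : lmodType F) (G : U -> W) (T : Type) (s : seq (T * T)) (g : T -> T -> U) :
  lin G -> G (sw s g) = sw s (fun x y => G (g x y)).
Proof.
move=> H; rewrite /sw; elim: s => [|p s IH]; first by rewrite !big_nil (lin0 H).
by rewrite !big_cons (linD _ _ H) IH.
Qed.

Lemma sw_lin_fun (U W : lmodType F) (T : Type) (s : seq (T * T)) (g : U -> T -> T -> W) :
  (forall x y, lin (fun z => g z x y)) -> lin (fun z => sw s (g z)).
Proof.
move=> H a x y; rewrite /sw; elim: s => [|p s IH]; first by rewrite !big_nil scaler0 addr0.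
rewrite !big_cons IH (H p.1 p.2 a x y) scalerDr.
by rewrite -!addrA; congr (_ + _); rewrite addrCA.
Qed.

Lemma eq_sw (T : Type) (W : nmodType) (s : seq (T * T)) (g h : T -> T -> W) :
  (forall x y, g x y = h x y) -> sw s g = sw s h.
Proof. by move=> H; rewrite /sw; apply: eq_bigr => p _. Qed.

Lemma lin_comp (U V W : lmodType F) (g : V -> W) (f : U -> V) :
  lin g -> lin f -> lin (fun x => g (f x)).
Proof. by move=> Hg Hf a x y /=; rewrite Hf Hg. Qed.

End Aux.

Theorem mainTheorem2 (F : fieldType) :
  (forall (C : lmodType F) (cop : C -> seq (C * C)) (eps : C -> F)
          (chi : C -> C -> C -> C) (theta : C -> C),
     is_hopf_heap cop eps chi -> grunspan cop eps chi theta ->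
     forall c, theta c = grunspan_formula cop chi c) /\
  (forall (C D : lmodType F)
          (copC : C -> seq (C * C)) (epsC : C -> F) (chiC : C -> C -> C -> C)
          (copD : D -> seq (D * D)) (epsD : D -> F) (chiD : D -> D -> D -> D)
          (f : C -> D) (thetaC : C -> C) (thetaD : D -> D),
     is_hopf_heap copC epsC chiC -> is_hopf_heap copD epsD chiD ->
     heap_morphism copC epsC chiC copD epsD chiD f ->
     grunspan copC epsC chiC thetaC -> grunspan copD epsD chiD thetaD ->
     forall c, f (thetaC c) = thetaD (f c)).
Proof.
have P1 : forall (C : lmodType F) (cop : C -> seq (C * C)) (eps : C -> F)
          (chi : C -> C -> C -> C) (theta : C -> C),
     is_hopf_heap cop eps chi -> grunspan cop eps chi theta ->
     forall c, theta c = grunspan_formula cop chi c.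
  move=> C cop eps chi th [Hco [[L1 [L2 L3]] [_ [_ [_ [CL CR]]]]]] [[Lth _] G] c.
  rewrite /grunspan_formula.
  transitivity (sw (cop c) (fun c1 r => sw (cop r) (fun c2 s => sw (cop s) (fun c3 t =>
     sw (cop t) (fun c4 c5 => chi (chi c1 c2 (th c3)) c4 c5))))); last first.
    apply: eq_sw => c1 r; apply: eq_sw => c2 s; apply: eq_sw => c3 t; apply: eq_sw => c4 c5.
    by rewrite G.
  have e1 : forall c1 c2 s, sw (cop s) (fun c3 t => sw (cop t) (fun c4 c5 =>
      chi (chi c1 c2 (th c3)) c4 c5)) = chi c1 c2 (th s).
    move=> c1 c2 s.
    have Hl : lin (fun z => chi c1 c2 (th z)) by apply: lin_comp.
    transitivity (sw (cop s) (fun c3 t => chi c1 c2 (th (eps t *: c3)))).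
      apply: eq_sw => c3 t; by rewrite CR (linZ _ _ Lth) (linZ _ _ (L3 c1 c2)).
    rewrite -{2}(counit_r Hco s).
    by rewrite (lin_sw _ _ Hl).
  rewrite (@eq_sw _ _ (cop c) _ (fun c1 r => sw (cop r) (fun c2 s => chi c1 c2 (th s))));
    last by move=> x y; apply: eq_sw => c2 s; apply: e1.
  have Ht : trilin (fun x y z => chi x y (th z)).
    split; first by move=> y z; apply: L1.
    split; first by move=> x z; apply: L2.
    by move=> x y; apply: lin_comp.
  rewrite -(coassoc Hco Ht c).
  rewrite (@eq_sw _ _ (cop c) _ (fun x y => th (eps x *: y)));
    last by move=> x y; rewrite CL (linZ _ _ Lth).
  by rewrite -(lin_sw _ _ Lth) (counit_l Hco).
split; first exact: P1.
move=> C D copC epsC chiC copD epsD chiD f thC thD HC HD [[Lf [Tf Ef]] Mf] GC GD c.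
rewrite (P1 _ _ _ _ _ HC GC) (P1 _ _ _ _ _ HD GD).
have HcoD := HD.1.
have [L1 [L2 L3]] := HD.2.1.
rewrite /grunspan_formula.
have B4 : forall X Y Z, bilin (fun c4 c5 => chiD X (chiD c4 Y Z) c5).
  move=> X Y Z; split; first by move=> y; apply: (lin_comp (g := fun u => chiD X u y)).
  by move=> x; apply: L3.
have B3 : forall X Z, bilin (fun c3 t => sw (copD t) (fun c4 c5 => chiD X (chiD c4 c3 Z) c5)).
  move=> X Z; split.
    move=> t; apply: sw_lin_fun => c4 c5.
    by apply: (lin_comp (g := fun u => chiD X u c5) (f := fun z => chiD c4 z Z)).
  by move=> c3 a x y; apply: (cop_lin HcoD (B4 _ _ _)).
have B2 : forall X, bilin (fun c2 s => sw (copD s) (fun c3 t => sw (copD t) (fun c4 c5 =>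
    chiD X (chiD c4 c3 c2) c5))).
  move=> X; split.
    move=> s; apply: sw_lin_fun => c3 t; apply: sw_lin_fun => c4 c5.
    by apply: (lin_comp (g := fun u => chiD X u c5) (f := fun z => chiD c4 c3 z)).
  by move=> c2 a x y; apply: (cop_lin HcoD (B3 _ _)).
have B1 : bilin (fun x r => sw (copD r) (fun c2 s => sw (copD s) (fun c3 t => sw (copD t)
    (fun c4 c5 => chiD x (chiD c4 c3 c2) c5)))).
  split.
    move=> r; apply: sw_lin_fun => c2 s; apply: sw_lin_fun => c3 t; apply: sw_lin_fun => c4 c5.
    by apply: L1.
  by move=> x a y z; apply: (cop_lin HcoD (B2 _)).
rewrite (Tf _ _ B1) (lin_sw _ _ Lf); apply: eq_sw => c1 r.
rewrite (Tf _ _ (B2 _)) (lin_sw _ _ Lf); apply: eq_sw => c2 s.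
rewrite (Tf _ _ (B3 _ _)) (lin_sw _ _ Lf); apply: eq_sw => c3 t.
rewrite (Tf _ _ (B4 _ _ _)) (lin_sw _ _ Lf); apply: eq_sw => c4 c5.
by rewrite !Mf.
Qed.
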